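(* Let $L,T$ be positive integers, $p_1<p_2<\dots<p_L$ distinct primes, $N_i=p_i+2L+2T-2$ for $i\in[L]$, $q_0$ a prime power with $q_0\ge N_L$, and $q=q_0^{p_1p_2\cdots p_L}$. Let $A=[A_1\ \cdots\ A_L]\in\mathbb{F}_q^{a\times b}$ and $B$ with $B^{\intercal}=[B_1^{\intercal}\ \cdots\ B_L^{\intercal}]\in\mathbb{F}_q^{c\times b}$, where $A_i\in\mathbb{F}_q^{a\times b/L}$, $B_i\in\mathbb{F}_q^{b/L\times c}$. Then, in the FTP code described in the context, for each $i\in[L]$ the value $h(\alpha_i)=A_iB_i$ can be computed from the responses of the $N_i$ servers $1,\dots,N_i$ for index $i$, namely from $\{\operatorname{tr}_{\mathbb{F}_q/F_i}(v_jk_i(\alpha_j)h(\alpha_j)) : j\in\{L+1,\dots,L+N_i\}\}$.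
   Context: For a finite extension $\mathbb{E}/\mathbb{F}$ of degree $s$, $\operatorname{tr}_{\mathbb{E}/\mathbb{F}}(x)=x+x^{|\mathbb{F}|}+\cdots+x^{|\mathbb{F}|^{s-1}}$, applied entrywise to matrices. FTP code: let $n=N_L+L$. For $i\in[L]$ pick $\alpha_i\in\mathbb{F}_q$ with $[\mathbb{F}_{q_0}(\alpha_i):\mathbb{F}_{q_0}]=p_i$, and let $F_i=\mathbb{F}_{q_0}(\alpha_j: j\in[L],j\ne i)$. Pick distinct $\alpha_{L+1},\dots,\alpha_n\in\mathbb{F}_{q_0}$. Let $R_1,\dots,R_T\in\mathbb{F}_q^{a\times b/L}$, $S_1,\dots,S_T\in\mathbb{F}_q^{b/L\times c}$ be random matrices. Let $f,g$ be polynomials with matrix coefficients over $\mathbb{F}_q$ of degree at most $L+T-1$ with $f(\alpha_i)=A_i,g(\alpha_i)=B_i$ ($i\in[L]$), $f(\alpha_{L+j})=R_j$, $g(\alpha_{L+j})=S_j$ ($j\in[T]$), and $h=fg$. Server $j\in[N_L]$ holds $f(\alpha_{L+j}),g(\alpha_{L+j})$ and hence $h(\alpha_{L+j})$. Define $v_j=\prod_{i\in[n],i\ne j}(\alpha_j-\alpha_i)^{-1}$, $U_i=\{L+1,\dots,L+N_i\}$, and $k_i(x)=\prod_{j\in[n]\setminus(U_i\cup\{i\})}(x-\alpha_j)$. For each $i\in[L]$, server $j\in[N_i]$ sends $\operatorname{tr}_{\mathbb{F}_q/F_i}(v_{L+j}k_i(\alpha_{L+j})h(\alpha_{L+j}))$.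 *)

(* Defs.v *)
From HB Require Import structures.
From mathcomp Require Import all_boot all_order all_algebra all_field.
Set Implicit Arguments. Unset Strict Implicit. Unset Printing Implicit Defensive.
Import GRing.Theory.
Local Open Scope ring_scope.

(* F0 plays the role of F_{q0}; K : fieldExtType F0 plays the role of F_q.
   Indices follow the paper: 1-based, functions on nat. *)

(* Relative trace tr_{K/U}(x) = x + x^|U| + ... + x^{|U|^(s-1)},
   s = [K : U] = \dim K / \dim U, |U| = |F0|^(\dim U). *)
Definition ftrace (F0 : finFieldType) (K : fieldExtType F0) (U : {vspace K})
    (x : K) : K :=
  \sum_(k < (\dim {:K} %/ \dim U)%N) x ^+ ((#|F0| ^ \dim U) ^ k)%N.

(* evaluation of a polynomial with matrix coefficients, represented as a
   matrix of polynomials *)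
Definition mxpeval (R : comNzRingType) (m n : nat) (f : 'M[{poly R}]_(m, n))
    (x : R) : 'M[R]_(m, n) := map_mx (fun p => p.[x]) f.

Section FTP.
Variables (F0 : finFieldType) (K : fieldExtType F0).
Variables (L T : nat) (p : nat -> nat) (alpha : nat -> K).

Definition ftpN (i : nat) : nat := (p i + 2 * L + 2 * T - 2)%N.
Definition ftpn : nat := (ftpN L + L)%N.

Definition ftpFi (i : nat) : {vspace K} :=
  <<1%VS & [seq alpha j | j <- iota 1 L & j != i]>>%VS.

Definition ftpv (j : nat) : K :=
  \prod_(1 <= l < ftpn.+1 | l != j) (alpha j - alpha l)^-1.

Definition ftpk (i : nat) (x : K) : K :=
  \prod_(1 <= j < ftpn.+1 |
           ~~ (((L + 1 <= j) && (j <= L + ftpN i))%N || (j == i))) (x - alpha j).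
End FTP.

(* Main.v *)
Require Import Defs.
From HB Require Import structures.
From mathcomp Require Import all_boot all_order all_algebra all_field.
Import GRing.Theory.
Local Open Scope ring_scope.
From mathcomp Require Import zify ring.
From Stdlib Require Import ClassicalEpsilon.
Section S.
Variables (F0 : finFieldType) (K : fieldExtType F0).
Lemma frobD (x y : K) k : (x + y) ^+ (#|F0| ^ k) = x ^+ (#|F0|^k) + y ^+ (#|F0|^k).
Proof.
have [p _ pcharFp] := finPcharP F0; rewrite (card_pprimeChar pcharFp) -expnM.
elim: (_ * _)%N => // n IHn; rewrite expnSr !exprM {}IHn.
by rewrite -(pchar_lalg K) in pcharFp; rewrite -!(pFrobenius_autE pcharFp) rmorphD.
Qed.
Lemma frobN (x : K) k : (- x) ^+ (#|F0| ^ k) = - x ^+ (#|F0|^k).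
Proof.
apply/eqP; rewrite -addr_eq0 -frobD addNr expr0n expn_eq0.
by have := finNzRing_gt1 F0; case: (#|F0|).
Qed.

Section V.
Variable U : {vspace K}.
Local Notation tr := (ftrace U).

Lemma tr_add x y : tr (x + y) = tr x + tr y.
Proof. by rewrite /ftrace -big_split; apply: eq_bigr => k _; rewrite -expnM frobD. Qed.
Lemma tr_opp x : tr (- x) = - tr x.
Proof. by rewrite /ftrace -sumrN; apply: eq_bigr => k _; rewrite -expnM frobN. Qed.
Lemma tr0 : tr 0 = 0.
Proof.
have h := tr_add 0 0; rewrite addr0 in h.
by apply: (addrI (tr 0)); rewrite -h addr0.
Qed.
Lemma tr_sub x y : tr (x - y) = tr x - tr y.
Proof. by rewrite tr_add tr_opp. Qed.
Lemma tr_sum (I : Type) (r : seq I) (P : pred I) (F : I -> K) :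
  tr (\sum_(j <- r | P j) F j) = \sum_(j <- r | P j) tr (F j).
Proof.
elim: r => [|a r IH]; first by rewrite !big_nil tr0.
by rewrite !big_cons; case: (P a); rewrite ?tr_add IH.
Qed.
End V.
Variable U : {aspace K}.
Local Notation tr := (ftrace U).
Lemma frobU u k : u \in U -> u ^+ ((#|F0| ^ \dim U) ^ k) = u.
Proof.
move=> Uu; have := Fermat's_little_theorem U u; rewrite Uu /= => /esym/eqP uQ.
elim: k => [|k IHk]; first by rewrite expr1.
by rewrite expnSr exprM IHk uQ.
Qed.
Lemma tr_scal u x : u \in U -> tr (u * x) = u * tr x.
Proof.
move=> Uu; rewrite /ftrace mulr_sumr; apply: eq_bigr => k _.
by rewrite exprMn frobU.
Qed.
Lemma card_K : #|finvect_type K| = (#|F0| ^ \dim {:K})%N.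
Proof.
rewrite -(card_vspacef (Vector.class (finvect_type K))).
by rewrite card_vspace.
Qed.
Lemma trace_nz : exists w, tr w != 0.
Proof.
pose rs : seq K := enum (finvect_type K).
suff /hasP[w _ ?] : has (fun w => tr w != 0) rs by exists w.
apply/negPn/negP => /hasPn H0.
have F0gt1 := finNzRing_gt1 F0.
set Q := (#|F0| ^ \dim U)%N; set s := (\dim {:K} %/ \dim U)%N.
have dU0 : (0 < \dim U)%N by rewrite adim_gt0.
have dUK : (\dim U <= \dim {:K})%N by rewrite dimvS ?subvf.
have s0 : (0 < s)%N by rewrite divn_gt0.
have Q1 : (1 < Q)%N by rewrite /Q -(expn0 #|F0|) ltn_exp2l.
pose T : {poly K} := \sum_(k < s) 'X^(Q ^ k).
have TE w : T.[w] = tr w.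
  by rewrite /T horner_sum; apply: eq_bigr => k _; rewrite hornerXn.
have Tnz : T != 0.
  have sp : (s.-1 < s)%N by rewrite ltn_predL.
  apply/eqP => /(congr1 (fun q : {poly K} => q`_(Q ^ s.-1))).
  rewrite coef0 /T coef_sum (bigD1 (Ordinal sp)) //=.
  rewrite coefXn eqxx big1 ?addr0; first by move/eqP; rewrite oner_eq0.
  move=> k /eqP nk; rewrite coefXn eqn_exp2l //.
  by case: eqP => // ek; case: nk; apply: val_inj.
have szT : (size T <= (Q ^ s.-1).+1)%N.
  apply: (leq_trans (size_sum _ _ _)); apply/bigmax_leqP => k _.
  rewrite size_polyXn ltnS leq_exp2l //; rewrite -ltnS prednK //.
have Hall : all (root T) rs by apply/allP => w /H0; rewrite rootE TE negbK.
have := max_poly_roots Tnz Hall (enum_uniq (finvect_type K)).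
have szr : size rs = (#|F0| ^ \dim {:K})%N by rewrite -card_K cardE.
rewrite szr => lt1.
have := leq_trans lt1 szT; rewrite ltnS /Q -expnM leq_exp2l // => le1.
have : (\dim U * s.-1 < \dim U * s)%N by rewrite ltn_pmul2l // prednK ?ltnSn.
rewrite ltnNge => /negP; apply; apply: (leq_trans _ le1).
by rewrite mulnC leq_trunc_div.
Qed.
Lemma trace_nondeg x y m0 : <<U; x>>%VS = fullv -> (adjoin_degree U x <= m0)%N ->
  (forall m, (m < m0)%N -> tr (x ^+ m * y) = 0) -> y = 0.
Proof.
move=> full deg H; apply/eqP/negPn/negP => y0.
have [w /eqP []] := trace_nz.
have Ez : w / y \in <<U; x>>%VS by rewrite full memvf.
have -> : w = (w / y) * y by rewrite divfK.
rewrite -(Fadjoin_poly_eq Ez) horner_coef mulr_suml tr_sum big1 // => m _.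
rewrite -mulrA tr_scal; last by apply/polyOverP/Fadjoin_polyOver.
rewrite H ?mulr0 //; apply: leq_trans deg; apply: leq_trans (size_Fadjoin_poly _ _ _).
exact: ltn_ord.
Qed.
End S.
Section Lag.
Variable F : fieldType.
Lemma lagrange0 (n : nat) (b : nat -> F) (P : {poly F}) :
  {in [pred j | (1 <= j <= n)%N] &, injective b} -> (size P < n)%N ->
  \sum_(1 <= j < n.+1) P.[b j] * \prod_(1 <= l < n.+1 | l != j) (b j - b l)^-1 = 0.
Proof.
move=> inj szP.
have n0 : (0 < n)%N by case: n szP {inj}.
set r := index_iota 1 n.+1.
have memr j : (j \in r) = (1 <= j <= n)%N by rewrite mem_index_iota ltnS.
have ur : uniq r by apply: iota_uniq.
have szr : size r = n by rewrite size_iota subn1.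
have injr : {in r &, injective b} by move=> x y; rewrite !memr; apply: inj.
pose pj j := \prod_(l <- r | l != j) ('X - (b l)%:P).
pose w j := \prod_(l <- r | l != j) (b j - b l)^-1.
have cnt j : j \in r -> count (predC1 j) r = n.-1.
  move=> jr; have := count_predC (pred1 j) r.
  by rewrite count_uniq_mem // jr szr add1n => <-.
have szpj j : j \in r -> size (pj j) = n.
  move=> jr; rewrite /pj -big_filter -(big_map b predT (fun x => 'X - x%:P)).
  by rewrite size_prod_XsubC size_map size_filter cnt // prednK.
have lcpj j : j \in r -> (pj j)`_n.-1 = 1.
  move=> jr; rewrite -{1}(szpj j jr) -lead_coefE; apply/eqP.
  exact: (monic_prod_XsubC r (fun l => l != j) b).
have wE j : j \in r -> w j * \prod_(l <- r | l != j) (b j - b l) = 1.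
  move=> jr; rewrite /w prodfV mulVf // prodf_seq_neq0.
  apply/allP => l lr; apply/implyP => lj; rewrite subr_eq0; apply/eqP => /injr.
  by move=> /(_ jr lr) ejl; rewrite ejl eqxx in lj.
pose Qp := \sum_(j <- r) (P.[b j] * w j) *: pj j.
have QE k : k \in r -> Qp.[b k] = P.[b k].
  move=> kr; rewrite horner_sum (bigD1_seq k) //= big1_seq ?addr0.
    by rewrite hornerZ /pj horner_prod -mulrA; under eq_bigr do rewrite hornerXsubC; rewrite wE ?mulr1.
  move=> j /andP[jk jr]; rewrite hornerZ /pj horner_prod.
  under eq_bigr do rewrite hornerXsubC.
  apply/eqP; rewrite mulf_eq0 prodf_seq_eq0; apply/orP; right.
  by apply/hasP; exists k => //; rewrite eq_sym jk subrr eqxx.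
have QP : Qp = P.
  apply/eqP; rewrite -subr_eq0; apply/negPn/negP => nz.
  have Hall : all (root (Qp - P)) (map b r).
    by apply/allP => _ /mapP[k kr ->]; rewrite rootE hornerD hornerN QE ?subrr.
  have := max_poly_roots nz Hall; rewrite map_inj_in_uniq // => /(_ ur).
  rewrite size_map szr; apply/negP; rewrite -leqNgt.
  apply: (leq_trans (size_polyD _ _)); rewrite size_polyN geq_max (ltnW szP) andbT.
  apply: (leq_trans (size_sum _ _ _)); apply/bigmax_leqP_seq => j jr _.
  by apply: (leq_trans (size_scale_leq _ _)); rewrite szpj.
have := congr1 (fun q : {poly F} => q`_n.-1) QP.
rewrite /Qp coef_sum nth_default; last by rewrite -ltnS prednK.
move=> e; apply: etrans e; apply: eq_big_seq => j jr.
by rewrite coefZ lcpj // mulr1.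
Qed.
End Lag.
Lemma mono_p (L : nat) (p : nat -> nat) :
  (forall i, (1 <= i < L)%N -> (p i < p i.+1)%N) ->
  forall a b, (1 <= a)%N -> (a < b)%N -> (b <= L)%N -> (p a < p b)%N.
Proof.
move=> H a b a1; elim: b => // b IH; rewrite ltnS leq_eqVlt => /orP[/eqP <- | ab] bL.
  by apply: H; rewrite a1 /=; lia.
by apply: ltn_trans (IH ab (ltnW bL)) (H _ _); apply/andP; split; lia.
Qed.

Lemma prod_dvd (L : nat) (p : nat -> nat) (d : nat) :
  (forall i, (1 <= i <= L)%N -> prime (p i)) ->
  (forall i, (1 <= i < L)%N -> (p i < p i.+1)%N) ->
  (forall i, (1 <= i <= L)%N -> p i %| d)%N ->
  (\prod_(1 <= i < L.+1) p i %| d)%N.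
Proof.
move=> pr mono dv.
suff: forall L', (L' <= L)%N -> (\prod_(1 <= i < L'.+1) p i %| d)%N by apply.
elim=> [|L' IH] LL; first by rewrite big_geq ?dvd1n.
have hL : (1 <= L'.+1 <= L)%N by apply/andP; split.
rewrite big_nat_recr //= Gauss_dvd; last first.
  rewrite coprime_sym.
  rewrite big_nat; apply: (big_ind (fun x => coprime (p L'.+1) x)); first exact: coprimen1.
    by move=> x y; rewrite coprimeMr => -> ->.
  move=> l /andP[l1 lL].
  have hl : (1 <= l <= L)%N by apply/andP; split => //; apply: leq_trans LL; apply: ltnW.
  rewrite prime_coprime ?pr // dvdn_prime2 ?pr //.
  rewrite neq_ltn (@mono_p L p mono l L'.+1) ?orbT //.
by rewrite IH ?dv // ltnW.
Qed.

Lemma core (F0 : finFieldType) (K : fieldExtType F0) (L T : nat) (p : nat -> nat) (alpha : nat -> K) (i : nat) :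
  (forall i, (1 <= i <= L)%N -> prime (p i)) ->
  (forall i, (1 <= i < L)%N -> (p i < p i.+1)%N) ->
  \dim {:K} = (\prod_(1 <= i < L.+1) p i)%N ->
  (forall i, (1 <= i <= L)%N -> \dim <<1%VS; alpha i>>%VS = p i) ->
  (forall j, (L + 1 <= j <= ftpn L T p)%N -> alpha j \in 1%VS) ->
  {in [pred j | (L + 1 <= j <= ftpn L T p)%N] &, forall j j', alpha j = alpha j' -> j = j'} ->
  (1 <= i <= L)%N ->
  forall P : {poly K}, (size P <= 2 * (L + T) - 1)%N ->
  (forall j, (1 <= j <= ftpN L T p i)%N ->
     ftrace (ftpFi L alpha i) (ftpv L T p alpha (L + j) * ftpk L T p alpha i (alpha (L + j)) * P.[alpha (L + j)]) = 0) ->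
  P.[alpha i] = 0.
Proof.
move=> pr mono dimK dimA inF injF iL P szP Htr.
have [i1 iL2] : (1 <= i)%N /\ (i <= L)%N by case/andP: iL.
have pLi : (p i <= p L)%N.
  case: (ltngtP i L) => [c|c|->] //; last by lia.
  by apply: ltnW; apply: (@mono_p L p mono).
have p2 : (2 <= p i)%N by apply: prime_gt1; apply: pr.
have nE : ftpn L T p = (p L + 2 * L + 2 * T - 2 + L)%N by [].
have NE : ftpN L T p i = (p i + 2 * L + 2 * T - 2)%N by [].
set n := ftpn L T p in nE inF injF *.
set N := ftpN L T p i in NE Htr *.
have NLn : (L + N <= n)%N by rewrite nE NE; lia.
have notF l : (1 <= l <= L)%N -> alpha l \notin 1%VS.
  move=> hl; apply/negP => /(@Fadjoin_idP _ _ 1%AS) h.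
  have := dimA l hl; rewrite h dimv1 => e.
  by have := prime_gt1 (pr l hl); rewrite -e.
have inj : {in [pred j | (1 <= j <= n)%N] &, injective alpha}.
  move=> j j'; rewrite !inE => hj hj' e.
  case: (leqP j L) => jL; case: (leqP j' L) => j'L.
  - have pe : p j = p j'.
      by rewrite -dimA ?e ?dimA //; apply/andP; split; lia.
    case: (ltngtP j j') => // c.
      by have := @mono_p L p mono j j'; rewrite pe ltnn; lia.
    by have := @mono_p L p mono j' j; rewrite pe ltnn; lia.
  - have h1 : (1 <= j <= L)%N by apply/andP; split; lia.
    have h2 : (L + 1 <= j' <= n)%N by apply/andP; split; lia.
    by have := notF j h1; rewrite e inF.
  - have h1 : (1 <= j' <= L)%N by apply/andP; split; lia.
    have h2 : (L + 1 <= j <= n)%N by apply/andP; split; lia.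
    by have := notF j' h1; rewrite -e inF.
  - by apply: injF => //; rewrite inE; apply/andP; split; lia.
pose cond j := ~~ (((L + 1 <= j) && (j <= L + N))%N || (j == i)).
pose r := index_iota 1 n.+1.
pose kp := \prod_(j <- r | cond j) ('X - (alpha j)%:P).
have kE x : ftpk L T p alpha i x = kp.[x].
  by rewrite /kp horner_prod; apply: eq_bigr => j _; rewrite hornerXsubC.
have kroot j : (1 <= j <= n)%N -> cond j -> kp.[alpha j] = 0.
  move=> hj cj; rewrite /kp horner_prod; apply/eqP; rewrite prodf_seq_eq0.
  apply/hasP; exists j; first by rewrite mem_index_iota ltnS.
  by rewrite cj hornerXsubC subrr eqxx.
have kszE : size kp = (n - N)%N.
  rewrite /kp -big_filter -(big_map alpha predT (fun x => 'X - x%:P)).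
  rewrite size_prod_XsubC size_map size_filter /r /index_iota subn1 /=.
  rewrite (_ : n = L + (N + (n - L - N)))%N; last by lia.
  rewrite !iotaD !count_cat.
  rewrite (@eq_in_count _ _ (predC1 i)); last first.
    move=> j; rewrite mem_iota /cond => /andP[j1 j2] /=.
    by rewrite (_ : (L + 1 <= j)%N = false) //; lia.
  rewrite (@eq_in_count _ _ pred0 (iota (1 + L) N)); last first.
    move=> j; rewrite mem_iota /cond => /andP[j1 j2] /=.
    by rewrite (_ : ((L + 1 <= j) && (j <= L + N))%N = true) //; lia.
  rewrite (@eq_in_count _ _ predT (iota (1 + L + N) _)); last first.
    move=> j; rewrite mem_iota /cond => /andP[j1 j2] /=.
    rewrite (_ : ((L + 1 <= j) && (j <= L + N))%N = false); last by lia.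
    by rewrite (_ : (j == i) = false) //; lia.
  rewrite count_pred0 count_predT size_iota.
  have := count_predC (pred1 i) (iota 1 L).
  rewrite count_uniq_mem ?iota_uniq // mem_iota size_iota.
  rewrite (_ : (1 <= i < 1 + L)%N = true); last by lia.
  move=> e; change (1 + count (predC1 i) (iota 1 L) = L)%N in e.
  lia.
pose UA : {aspace K} := agenv_aspace (1 + <<[seq alpha j | j <- iota 1 L & j != i]>>)%VS.
have trE : ftrace (ftpFi L alpha i) = ftrace UA by [].
rewrite trE in Htr.
have full : <<UA; alpha i>>%VS = fullv.
  pose E : {aspace K} := <<UA; alpha i>>%AS.
  have memE l : (1 <= l <= L)%N -> alpha l \in E.
    move=> hl; case: (eqVneq l i) => [-> | li]; first exact: memv_adjoin.
    apply: (subvP (subv_adjoin UA (alpha i))); apply: seqv_sub_adjoin.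
    by apply: map_f; rewrite mem_filter li mem_iota; lia.
  have dvE l : (1 <= l <= L)%N -> (p l %| \dim E)%N.
    by move=> hl; rewrite -dimA //; apply: field_dimS; rewrite sub_adjoin1v memE.
  apply/eqP; rewrite eqEdim subvf /= dimK.
  have := dvdn_leq (adim_gt0 E) (@prod_dvd L p _ pr mono dvE).
  by [].
have adj : (adjoin_degree UA (alpha i) <= p i)%N.
  have := dvdp_leq (monic_neq0 (monic_minPoly 1%VS (alpha i))) (minPolyS (alpha i) (sub1v UA)).
  rewrite !size_minPoly ltnS => /leq_trans; apply.
  have := dim_Fadjoin 1%AS (alpha i); rewrite dimv1 muln1 dimA // => <-.
  by [].
have vE j : ftpv L T p alpha j = \prod_(1 <= l < n.+1 | l != j) (alpha j - alpha l)^-1 by [].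
pose y := ftpv L T p alpha i * kp.[alpha i] * P.[alpha i].
have key m : (m < p i)%N -> ftrace UA (alpha i ^+ m * y) = 0.
  move=> mp.
  pose G j := alpha j ^+ m * kp.[alpha j] * P.[alpha j] * ftpv L T p alpha j.
  have szQ : (size ('X^m * kp * P)%R < n)%N.
    have s1 := size_polyMleq ('X^m * kp) P.
    have s2 := size_polyMleq ('X^m) kp; rewrite size_polyXn kszE in s2.
    rewrite addSn /= in s2.
    apply: (leq_ltn_trans s1).
    apply: (@leq_ltn_trans ((m + (n - N) + (2 * (L + T) - 1)).-1)).
      by rewrite -!subn1 leq_sub2r // leq_add.
    rewrite -subn1 nE NE; lia.
  have HL := @lagrange0 K n alpha _ inj szQ.
  have sumG : \sum_(1 <= j < n.+1) G j = 0.
    by apply: (etrans _ HL); apply: eq_bigr => j _; rewrite /G vE !hornerM hornerXn.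
  rewrite (big_cat_nat _ (n:=L.+1)) in sumG; [|lia|lia].
  have e3 : \sum_(L.+1 <= j < n.+1) G j =
     \sum_(L.+1 <= j < (L+N).+1) G j + \sum_((L+N).+1 <= j < n.+1) G j.
    by apply: big_cat_nat; lia.
  have p1 : \sum_(1 <= j < L.+1) G j = G i.
    rewrite (bigD1_seq i) ?mem_index_iota ?iota_uniq //=.
    rewrite big1_seq ?addr0 // => j /andP[ji]; rewrite mem_index_iota => jr.
    rewrite /G kroot ?mulr0 ?mul0r //; first by lia.
    rewrite /cond (negbTE ji) orbF; apply/negP => /andP[a b]; lia.
  have p2' : \sum_(L.+1 <= j < (L+N).+1) G j = \sum_(1 <= j < N.+1) G (L + j).
    rewrite -[in LHS](add1n L) big_addn.
    rewrite (_ : ((L + N).+1 - L = N.+1)%N); last by lia.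
    by apply: eq_bigr => j _; rewrite addnC.
  have p3 : \sum_((L+N).+1 <= j < n.+1) G j = 0.
    rewrite big_nat_cond big1 // => j /andP[/andP[lo hi] _].
    rewrite /G kroot ?mulr0 ?mul0r //; first by lia.
    rewrite /cond negb_or; apply/andP; split; apply/negP; [move=> /andP[a b] | move=> /eqP ji]; lia.
  rewrite e3 p1 p2' p3 addr0 in sumG.
  have := congr1 (ftrace UA) sumG; rewrite tr0 tr_add tr_sum big_nat_cond big1 ?addr0.
    by rewrite /G /y (_ : forall a b c d : K, a * b * c * d = a * (d * b * c)) // => a b c d; ring.
  move=> j /andP[/andP[lo hi] _].
  rewrite /G -kE (_ : forall a b c d : K, a * b * c * d = a * (d * b * c)); last by move=> a b c d; ring.
  rewrite tr_scal ?Htr ?mulr0 //; first by apply/andP; split; lia.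
  apply: rpredX; apply: (subvP (sub1v UA)); apply: inF; apply/andP; split; lia.
have y0 := @trace_nondeg F0 K UA (alpha i) y (p i) full adj key.
have iR : (1 <= i <= n)%N by apply/andP; split; lia.
have vnz : ftpv L T p alpha i != 0.
  rewrite vE prodf_seq_neq0; apply/allP => l lr; apply/implyP => li.
  rewrite invr_eq0 subr_eq0; apply/eqP => e.
  move: lr; rewrite mem_index_iota ltnS => lr.
  by move: li; rewrite (inj i l iR lr e) eqxx.
have knz : kp.[alpha i] != 0.
  rewrite /kp horner_prod prodf_seq_neq0; apply/allP => l lr; apply/implyP => cl.
  rewrite hornerXsubC subr_eq0; apply/eqP => e.
  move: lr; rewrite mem_index_iota ltnS => lr.
  have := inj i l iR lr e => il; move: cl; rewrite /cond il eqxx orbT.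
  by [].
by move/eqP: y0; rewrite /y !mulf_eq0 (negbTE vnz) (negbTE knz) /= => /eqP.
Qed.


Theorem lemma1 (F0 : finFieldType) (K : fieldExtType F0)
  (L T : nat) (p : nat -> nat) (a b c : nat) (alpha : nat -> K) :
  (0 < L)%N -> (0 < T)%N ->
  (forall i, (1 <= i <= L)%N -> prime (p i)) ->
  (forall i, (1 <= i < L)%N -> (p i < p i.+1)%N) ->
  (ftpN L T p L <= #|F0|)%N ->
  \dim {:K} = (\prod_(1 <= i < L.+1) p i)%N ->
  (L %| b)%N ->
  (* alpha_i, i in [L], has degree p_i over F_{q0} *)
  (forall i, (1 <= i <= L)%N -> \dim <<1%VS; alpha i>>%VS = p i) ->
  (* alpha_{L+1}, ..., alpha_n are distinct elements of F_{q0} *)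
  (forall j, (L + 1 <= j <= ftpn L T p)%N -> alpha j \in 1%VS) ->
  {in [pred j | (L + 1 <= j <= ftpn L T p)%N] &,
     forall j j', alpha j = alpha j' -> j = j'} ->
  forall i, (1 <= i <= L)%N ->
  exists D : (nat -> 'M[K]_(a, c)) -> 'M[K]_(a, c),
  forall (A : nat -> 'M[K]_(a, b %/ L)) (B : nat -> 'M[K]_(b %/ L, c))
         (R : nat -> 'M[K]_(a, b %/ L)) (S : nat -> 'M[K]_(b %/ L, c))
         (f : 'M[{poly K}]_(a, b %/ L)) (g : 'M[{poly K}]_(b %/ L, c)),
    (forall r s, (size (f r s) <= L + T)%N) ->
    (forall r s, (size (g r s) <= L + T)%N) ->
    (forall l, (1 <= l <= L)%N ->
        mxpeval f (alpha l) = A l /\ mxpeval g (alpha l) = B l) ->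
    (forall j, (1 <= j <= T)%N ->
        mxpeval f (alpha (L + j)%N) = R j /\ mxpeval g (alpha (L + j)%N) = S j) ->
    let h := f *m g in
    D (fun j => if (1 <= j <= ftpN L T p i)%N then
                  map_mx (ftrace (ftpFi L alpha i))
                    ((ftpv L T p alpha (L + j)%N *
                      ftpk L T p alpha i (alpha (L + j)%N)) *:
                       mxpeval h (alpha (L + j)%N))
                else 0)
    = A i *m B i.
Proof.
move=> L0 T0 pr mono hq dimK Lb dimA inF injF i iL.
pose N := ftpN L T p i.
pose resp (h : 'M[{poly K}]_(a, c)) := fun j => if (1 <= j <= N)%N then
  map_mx (ftrace (ftpFi L alpha i)) ((ftpv L T p alpha (L + j)%N *
     ftpk L T p alpha i (alpha (L + j)%N)) *: mxpeval h (alpha (L + j)%N)) else 0.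
pose good (h : 'M[{poly K}]_(a, c)) := forall r s, (size (h r s) <= 2 * (L + T) - 1)%N.
pose D X := epsilon (inhabits (0 : 'M[K]_(a, c)))
  (fun M => exists h, good h /\ resp h = X /\ M = mxpeval h (alpha i)).
exists D => A B R S f g szf szg hAB hRS h.
have goodh : good h.
  move=> r s; rewrite /h mxE; apply: leq_trans (size_sum _ _ _) _.
  apply/bigmax_leqP => k _; apply: leq_trans (size_polyMleq _ _) _.
  by rewrite -!subn1 leq_sub2r // mul2n -addnn leq_add.
have uniq_h h' : good h' -> resp h' = resp h -> mxpeval h' (alpha i) = mxpeval h (alpha i).
  move=> gh' e; apply/matrixP => r s; rewrite !mxE; apply/eqP; rewrite -subr_eq0.
  rewrite -hornerN -hornerD; apply/eqP.
  apply: (@core F0 K L T p alpha i pr mono dimK dimA inF injF iL).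
    apply: leq_trans (size_polyD _ _) _; rewrite size_polyN geq_max.
    apply/andP; split; first exact: gh'.
    by have := goodh r s; rewrite /h mxE.
  move=> j hj; have := congr1 (fun F : nat -> 'M[K]_(a, c) => F j r s) e; rewrite /resp hj !mxE => e'.
  by rewrite hornerD hornerN mulrBr tr_sub e' subrr.
have := epsilon_spec (inhabits (0 : 'M[K]_(a, c)))
  (fun M => exists h', good h' /\ resp h' = resp h /\ M = mxpeval h' (alpha i))
  (ex_intro _ (mxpeval h (alpha i)) (ex_intro _ h (conj goodh (conj erefl erefl)))).
move=> [h' [gh' [e' E]]].
change (D (resp h) = A i *m B i).
apply: (etrans E); rewrite (uniq_h h' gh' e').
have [<- <-] := hAB i iL.
apply/matrixP => r s; rewrite !mxE horner_sum; apply: eq_bigr => k _.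
by rewrite hornerM !mxE.
Qed.
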